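(* Let $\Gamma$ be an infinite group generated by a finite set $X$ and let $\pi:\mathbb F_X\to\Gamma$ be the canonical projection. Then $\overline\mu(\ker\pi)=0$; equivalently, $\ker\pi$ is LB-negligible.
   Context: $\mathbb F_X$ is the free group on $X$, $|\omega|$ the reduced word length, $B_n=\{\omega\in\mathbb F_X:|\omega|\le n\}$. For $S\subset\mathbb F_X$, $\overline\mu(S)=\limsup_{n\to\infty}\max_{\omega\in\mathbb F_X}\frac{|S\cap\omega B_n|}{|B_n|}$ and $\underline\mu(S)=\liminf_{n\to\infty}\min_{\omega\in\mathbb F_X}\frac{|S\cap\omega B_n|}{|B_n|}$. A set is LB-generic if $\underline\mu=1$, and $N$ is LB-negligible if its complement is LB-generic, i.e. $\overline\mu(N)=0$. *)

(* Defs.v *)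
From HB Require Import structures.
From mathcomp Require Import all_boot all_order all_algebra.
From mathcomp Require Import boolp classical_sets cardinality reals topology sequences.
Set Implicit Arguments. Unset Strict Implicit. Unset Printing Implicit Defensive.
Import Order.TTheory GRing.Theory Num.Theory.

Section FreeGroup.
Variable X : finType.

(* a letter is x^{+1} (false) or x^{-1} (true) *)
Definition letter := (X * bool)%type.
Definition linv (a : letter) : letter := (a.1, ~~ a.2).

Fixpoint reduced (w : seq letter) : bool :=
  match w with
  | a :: ((b :: _) as w') => (b != linv a) && reduced w'
  | _ => true
  end.

Definition red_cons (a : letter) (w : seq letter) : seq letter :=
  match w with
  | b :: w' => if b == linv a then w' else a :: w
  | [::] => [:: a]
  end.
Definition reduce (w : seq letter) : seq letter := foldr red_cons [::] w.

(* elements of F_X are the reduced words; product = reduced concatenation;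
   |w| = size w for a reduced word w *)
Definition fmul (u v : seq letter) : seq letter := reduce (u ++ v).

Fixpoint words (k : nat) : seq (seq letter) :=
  if k is k'.+1 then [seq a :: w | a <- enum {: letter}, w <- words k']
  else [:: [::]].

Definition ball (n : nat) : seq (seq letter) :=
  undup [seq w <- flatten [seq words k | k <- iota 0 n.+1] | reduced w].

Definition tball (om : seq letter) (n : nat) : seq (seq letter) :=
  undup [seq fmul om b | b <- ball n].

Definition ratio {R : realType} (S : set (seq letter)) (om : seq letter)
  (n : nat) : R :=
  ((count (fun v => `[< S v >]) (tball om n))%:R / (size (ball n))%:R)%R.

(* max over omega in F_X of the ratio (a max of finitely many values) *)
Definition max_ratio {R : realType} (S : set (seq letter)) (n : nat) : R :=
  sup [set r : R | exists om, reduced om /\ r = ratio S om n].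

Definition upper_density {R : realType} (S : set (seq letter)) : R :=
  limn_sup (fun n => @max_ratio R S n).

End FreeGroup.

Definition is_group (G : Type) (mul : G -> G -> G) (one : G) (inv : G -> G) :=
  [/\ forall a b c, mul a (mul b c) = mul (mul a b) c,
      forall a, mul one a = a &
      forall a, mul (inv a) a = one].

Section Projection.
Variables (X : finType) (G : Type) (mul : G -> G -> G) (one : G) (inv : G -> G)
          (g : X -> G).

Definition gen_of (a : letter X) : G := if a.2 then inv (g a.1) else g a.1.

Definition proj (w : seq (letter X)) : G :=
  foldr (fun a acc => mul (gen_of a) acc) one w.

Definition kerproj : set (seq (letter X)) :=
  [set w | reduced w /\ proj w = one].

Definition generates : Prop := forall y : G, exists w, proj w = y.
End Projection.

(* Main.v *)
From Pilot Require Import Defs.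
From mathcomp Require Import all_boot all_order all_algebra.
From mathcomp Require Import boolp classical_sets cardinality reals topology sequences normedtype.
From mathcomp Require Import zify ring lra.
Set Implicit Arguments. Unset Strict Implicit. Unset Printing Implicit Defensive.
Import Order.TTheory GRing.Theory Num.Theory numFieldNormedType.Exports.

Section Lag.
Local Open Scope ring_scope.
Lemma lagr (R : realFieldType) (I : finType) (x : I -> R) i j :
  (x i - x j) ^+ 2 <= 2 * (#|I|%:R * \sum_t x t ^+ 2 - (\sum_t x t) ^+ 2).
Proof.
have A : \sum_(t : I) \sum_(s : I) x t ^+ 2 = #|I|%:R * \sum_t x t ^+ 2.
  under eq_bigr do rewrite sumr_const.
  by rewrite sumrMnl mulr_natl.
have B : \sum_(t : I) \sum_(s : I) x s ^+ 2 = #|I|%:R * \sum_t x t ^+ 2.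
  by rewrite sumr_const mulr_natl.
have C : \sum_(t : I) \sum_(s : I) (x t * x s) = (\sum_t x t) ^+ 2.
  by rewrite expr2 mulr_suml; apply: eq_bigr => t _; rewrite mulr_sumr.
have e : \sum_t \sum_s (x t - x s) ^+ 2 =
    2 * (#|I|%:R * \sum_t x t ^+ 2 - (\sum_t x t) ^+ 2).
  transitivity (\sum_(t : I) \sum_(s : I) x t ^+ 2 + \sum_(t : I) \sum_(s : I) x s ^+ 2
     - 2 * \sum_(t : I) \sum_(s : I) (x t * x s)); last by rewrite A B C; ring.
  rewrite -big_split /= mulr_sumr -sumrB; apply: eq_bigr => t _.
  rewrite -big_split /= mulr_sumr -sumrB; apply: eq_bigr => s _.
  ring.
rewrite -e (bigD1 i) //= (bigD1 j) //=.
have h1 : 0 <= \sum_(s | s != j) (x i - x s) ^+ 2 by apply: sumr_ge0 => s _; exact: sqr_ge0.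
have h2 : 0 <= \sum_(t | t != i) \sum_s (x t - x s) ^+ 2.
  by apply: sumr_ge0 => t _; apply: sumr_ge0 => s _; exact: sqr_ge0.
lra.
Qed.
End Lag.

Section Grp.
Variables (X : finType) (G : Type) (mul : G -> G -> G) (one : G) (inv : G -> G)
          (g : X -> G).
Hypothesis grp : is_group mul one inv.

Let mulA : forall a b c, mul a (mul b c) = mul (mul a b) c.
Proof. by case: grp. Qed.
Let mul1g : forall a, mul one a = a.
Proof. by case: grp. Qed.
Let mulVg : forall a, mul (inv a) a = one.
Proof. by case: grp. Qed.

Lemma mulKg a b : mul (inv a) (mul a b) = b.
Proof. by rewrite mulA mulVg mul1g. Qed.
Lemma mulgV a : mul a (inv a) = one.
Proof.
transitivity (mul (mul (inv (inv a)) (inv a)) (mul a (inv a))).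
  by rewrite mulVg mul1g.
by rewrite -mulA (mulA (inv a) a) mulVg mul1g mulVg.
Qed.
Lemma mulg1 a : mul a one = a.
Proof. by rewrite -(mulVg a) mulA mulgV mul1g. Qed.
Lemma invgK a : inv (inv a) = a.
Proof. by rewrite -[inv (inv a)]mulg1 -(mulVg a) mulA mulVg mul1g. Qed.
Lemma mulgK a b : mul a (mul (inv a) b) = b.
Proof. by rewrite -{1}(invgK a) mulKg. Qed.
Lemma mulg_injl a b c : mul a b = mul a c -> b = c.
Proof. by move=> e; rewrite -(mulKg a b) e mulKg. Qed.
Lemma mulg_injr a b c : mul b a = mul c a -> b = c.
Proof.
move=> e; have : mul (mul b a) (inv a) = mul (mul c a) (inv a) by rewrite e.
by rewrite -!mulA mulgV !mulg1.
Qed.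

Notation gen := (gen_of inv g).
Notation prj := (proj mul one inv g).

Lemma gen_linv a : gen (linv a) = inv (gen a).
Proof. by case: a => x [] /=; rewrite /gen_of /= ?invgK. Qed.

Lemma gen_linvK a : mul (gen a) (gen (linv a)) = one.
Proof. by rewrite gen_linv mulgV. Qed.

Lemma proj_cons a w : prj (a :: w) = mul (gen a) (prj w).
Proof. by []. Qed.

Lemma proj_cat u v : prj (u ++ v) = mul (prj u) (prj v).
Proof. by elim: u => [|a u IH] /=; rewrite ?mul1g // IH mulA. Qed.

Lemma proj_red_cons a w : prj (red_cons a w) = mul (gen a) (prj w).
Proof.
case: w => [|b w] //=.
case: eqP => [->|] //=.
by rewrite mulA -[gen (linv a)]/(gen (linv a)) gen_linvK mul1g.
Qed.

Lemma proj_reduce w : prj (reduce w) = prj w.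
Proof. by elim: w => [|a w IH] //=; rewrite proj_red_cons IH. Qed.

Lemma proj_fmul u v : prj (fmul u v) = mul (prj u) (prj v).
Proof. by rewrite /fmul proj_reduce proj_cat. Qed.


Notation word := (seq (letter X)).
Definition CG := {classic G}.
Definition pj (w : word) : CG := prj w.

Definition W k : seq word := [seq w <- words X k | reduced w].
Definition ok (a : letter X) (w : word) : bool :=
  if w is b :: _ then b != linv a else true.

Lemma reduced_cons a w : reduced (a :: w) = ok a w && reduced w.
Proof. by case: w. Qed.

Lemma size_words k w : w \in words X k -> size w = k.
Proof.
elim: k w => [|k IH] w /=; first by rewrite inE => /eqP ->.
case/allpairsP => [[a u] /= [_ hu ->]] /=.
by rewrite (IH _ hu).
Qed.

Lemma uniq_words k : uniq (words X k).
Proof.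
elim: k => [|k IH] //=.
apply: allpairs_uniq => //; first exact: enum_uniq.
by move=> [a u] [b v] _ _ /= [-> ->].
Qed.

Lemma mem_words k w : (w \in words X k) = (size w == k).
Proof.
elim: k w => [|k IH] [|a w] /=.
- by rewrite inE.
- by rewrite inE.
- by apply/negP => /allpairsP [[b u] /= [_ _ //]].
apply/allpairsP/idP => [[[b u] /= [_ hu [_ ->]]]|]; first by rewrite eqSS -IH.
by move=> hs; exists (a, w); rewrite mem_enum IH.
Qed.
Lemma mem_W k w : (w \in W k) = (size w == k) && reduced w.
Proof. by rewrite mem_filter mem_words andbC. Qed.

Lemma big_W_succ (R : Type) (idx : R) (op : Monoid.com_law idx) k (F : word -> R) :
  \big[op/idx]_(x <- W k.+1) F x =
  \big[op/idx]_(a : letter X) \big[op/idx]_(w <- W k | ok a w) F (a :: w).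
Proof.
rewrite /W /= big_filter big_mkcond big_allpairs_dep /=.
rewrite big_enum /=.
apply: eq_big => [a|a _]; first by [].
rewrite big_filter_cond [RHS]big_mkcond; apply: eq_bigr => w _.
by case: w => [|b w] //=; rewrite andbC.
Qed.

Lemma uniq_flat m i : uniq (flatten [seq words X k | k <- iota i m]).
Proof.
elim: m i => [|m IH] i //=.
rewrite cat_uniq uniq_words IH /= andbT.
apply/hasPn => w /flattenP [s /mapP [j]].
rewrite mem_iota => /andP [hij _] -> hw.
rewrite mem_words (size_words hw).
by apply/eqP => e; move: hij; rewrite e ltnn.
Qed.

Lemma ball_eq n : Pilot.Defs.ball X n = flatten [seq W k | k <- iota 0 n.+1].
Proof.
rewrite /Pilot.Defs.ball undup_id ?filter_uniq ?uniq_flat //.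
by rewrite filter_flatten -map_comp.
Qed.

Lemma count_ball (p : pred word) n :
  count p (Pilot.Defs.ball X n) = \sum_(k < n.+1) count p (W k).
Proof.
rewrite ball_eq count_flatten -map_comp sumnE big_map.
by rewrite -(big_mkord xpredT (fun k => count p (W k))) /index_iota subn0.
Qed.

Lemma size_ball n : size (Pilot.Defs.ball X n) = \sum_(k < n.+1) size (W k).
Proof.
rewrite -count_predT count_ball; apply: eq_bigr => k _.
by rewrite count_predT.
Qed.

Variable a0 : letter X.
Definition hd (u : word) := head a0 u.
Local Notation L := #|{: letter X}|.

Lemma linvK : involutive (@linv X).
Proof. by case=> x b; rewrite /linv /= negbK. Qed.
Lemma linv_inj : injective (@linv X).
Proof. exact: inv_inj linvK. Qed.

Lemma sum_bool_card (P : pred (letter X)) : \sum_(a : letter X) (P a : nat) = #|P|.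
Proof.
rewrite -sum1_card [RHS]big_mkcond /=; apply: eq_bigr => a _.
by rewrite unfold_in; case: (P a).
Qed.

Lemma sum_ok1 h : \sum_(a : letter X) (h != linv a) = L.-1.
Proof.
rewrite (reindex_inj linv_inj) /=.
under eq_bigr do rewrite linvK.
rewrite sum_bool_card -(cardC1 h); apply: eq_card => j.
by rewrite !inE eq_sym.
Qed.

Lemma sum_ok2 h h' :
  \sum_(a : letter X) ((h != linv a) && (h' != linv a)) = L - (h != h').+1.
Proof.
rewrite (reindex_inj linv_inj) /=.
under eq_bigr do rewrite linvK.
rewrite sum_bool_card -(card2 h h') -(cardC (pred2 h h')) addKn.
by apply: eq_card => j; rewrite !inE negb_or ![j == _]eq_sym.
Qed.

Lemma W_cons k w : w \in W k.+1 -> exists b u, w = b :: u.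
Proof. by rewrite mem_W; case: w => [|b u] //; exists b, u. Qed.

Lemma ok_hd k a w : w \in W k.+1 -> ok a w = (hd w != linv a).
Proof. by move/W_cons => [b [u ->]]. Qed.

Lemma size_W_succ k : size (W k.+2) = L.-1 * size (W k.+1).
Proof.
rewrite -!sum1_size big_W_succ.
rewrite (eq_bigr (fun a => \sum_(w <- W k.+1) (ok a w : nat))); last first.
  by move=> a _; rewrite big_mkcond /=; apply: eq_bigr => w _; case: (ok a w).
rewrite exchange_big /= big_distrr /= muln1.
apply: eq_big_seq => w hw.
by rewrite -(sum_ok1 (hd w)); apply: eq_bigr => a _; rewrite (ok_hd _ hw).
Qed.

Lemma size_W1 : size (W 1) = L.
Proof.
rewrite -sum1_size big_W_succ /= -sum1_card.
by apply: eq_bigr => a _; rewrite /W /= big_cons big_nil.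
Qed.

Lemma pj_cons a u : pj (a :: u) = mul (gen a) (pj u) :> G.
Proof. by []. Qed.

Lemma pj_cons_eq a u v : (pj (a :: u) == pj (a :: v)) = (pj u == pj v).
Proof.
apply/eqP/eqP => [e|e]; last by rewrite !pj_cons e.
exact: (mulg_injl e).
Qed.

Definition Ek k := \sum_(u <- W k) \sum_(v <- W k) ((hd u == hd v) && (pj u == pj v)).
Definition Pk k := \sum_(u <- W k) \sum_(v <- W k) (pj u == pj v : nat).

Lemma E_succ k : 2 <= L -> Ek k.+2 = Ek k.+1 + (L - 2) * Pk k.+1.
Proof.
move=> L2.
rewrite /Ek big_W_succ.
rewrite (eq_bigr (fun a => \sum_(u <- W k.+1 | ok a u) \sum_(v <- W k.+1 | ok a v)
            (pj u == pj v : nat))); last first.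
  move=> a _; apply: eq_bigr => u _.
  rewrite big_W_succ (bigD1 a) //= [X in _ + X]big1 ?addn0; last first.
    move=> b hb; apply: big1 => v _ /=.
    by rewrite /hd /= eq_sym (negbTE hb).
  by apply: eq_bigr => v _; rewrite /hd /= eqxx pj_cons_eq.
rewrite (eq_bigr (fun a => \sum_(u <- W k.+1) \sum_(v <- W k.+1)
            ((ok a u && ok a v) * (pj u == pj v) : nat))); last first.
  move=> a _; rewrite big_mkcond; apply: eq_bigr => u _.
  rewrite big_mkcond; case: (ok a u) => /=.
    by apply: eq_bigr => v _; case: (ok a v); rewrite ?mul1n ?mul0n.
  by rewrite big1 // => v _; rewrite mul0n.
rewrite exchange_big /Pk big_distrr -big_split /=.
apply: eq_big_seq => u hu.
rewrite exchange_big big_distrr -big_split /=.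
apply: eq_big_seq => v hv.
rewrite -big_distrl /=.
under eq_bigr do rewrite (ok_hd _ hu) (ok_hd _ hv).
rewrite sum_ok2.
by case: (hd u == hd v); case: (pj u == pj v) => /=;
  rewrite ?muln0 ?muln1 ?addn0 ?add0n; lia.
Qed.

Definition cnt k t (d : CG) := \sum_(u <- W k) ((hd u == t) && (pj u == d)).

Lemma sumY (s1 s2 : seq word) (p q : pred word) (Y : seq CG) :
  uniq Y -> {in s1, forall u, pj u \in Y} ->
  \sum_(d <- Y) (\sum_(u <- s1) (p u && (pj u == d))) * (\sum_(v <- s2) (q v && (pj v == d)))
  = \sum_(u <- s1) \sum_(v <- s2) (p u && q v && (pj u == pj v)).
Proof.
move=> uY hY.
under eq_bigr do rewrite big_distrlr.
rewrite exchange_big; apply: eq_big_seq => u hu; rewrite exchange_big; apply: eq_bigr => v _.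
rewrite (bigD1_seq (pj u)) ?hY //= big1 ?addn0 => [|d hd'].
  by rewrite eqxx eq_sym; case: (p u); case: (q v); case: (pj u == pj v).
by rewrite eq_sym (negbTE hd') andbF mul0n.
Qed.

Lemma sum_pred1_letter (h : letter X) (F : letter X -> nat) :
  \sum_(t : letter X) ((h == t) * F t) = F h.
Proof.
rewrite (bigD1 h) //= eqxx mul1n big1 ?addn0 // => t ht.
by rewrite eq_sym (negbTE ht) mul0n.
Qed.

Lemma Ek_Y k (Y : seq CG) : uniq Y -> {in W k, forall u, pj u \in Y} ->
  Ek k = \sum_(d <- Y) \sum_(t : letter X) cnt k t d * cnt k t d.
Proof.
move=> uY hY; rewrite exchange_big /=.
under eq_bigr do rewrite sumY //.
rewrite /Ek [RHS]exchange_big /=; apply: eq_bigr => u _.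
rewrite [RHS]exchange_big /=; apply: eq_bigr => v _.
transitivity (\sum_(t : letter X) ((hd u == t) * ((hd v == t) && (pj u == pj v)))).
  by rewrite sum_pred1_letter eq_sym.
by apply: eq_bigr => t _; case: (hd u == t); rewrite ?mul1n ?mul0n.
Qed.

Lemma sum_cnt k d : \sum_(t : letter X) cnt k t d = \sum_(u <- W k) (pj u == d : nat).
Proof.
rewrite exchange_big /=; apply: eq_bigr => u _.
transitivity (\sum_(t : letter X) ((hd u == t) * (pj u == d : nat))).
  by apply: eq_bigr => t _; case: (hd u == t); rewrite ?mul1n ?mul0n.
by rewrite sum_pred1_letter.
Qed.

Lemma Pk_Y k (Y : seq CG) : uniq Y -> {in W k, forall u, pj u \in Y} ->
  Pk k = \sum_(d <- Y) (\sum_(t : letter X) cnt k t d) * (\sum_(t : letter X) cnt k t d).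
Proof.
move=> uY hY.
under eq_bigr do rewrite sum_cnt.
transitivity (\sum_(d <- Y) (\sum_(u <- W k) (xpredT u && (pj u == d))) *
  (\sum_(v <- W k) (xpredT v && (pj v == d)))); last by [].
by rewrite sumY.
Qed.

Variable R : realType.
Local Open Scope ring_scope.

Lemma cnt_ineq k t t' (d0 : CG) :
  ((cnt k t d0)%:R - (cnt k t' d0)%:R : R) ^+ 2 <=
     2 * (L%:R * (Ek k)%:R - (Pk k)%:R).
Proof.
set Y := undup (d0 :: map pj (W k)).
have uY : uniq Y := undup_uniq _.
have hY : {in W k, forall u, pj u \in Y}.
  by move=> u hu; rewrite mem_undup inE map_f ?orbT.
have EY : (Ek k)%:R = \sum_(d <- Y) \sum_(t : letter X) ((cnt k t d)%:R ^+ 2 : R).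
  rewrite (Ek_Y uY hY) natr_sum; apply: eq_bigr => d _.
  by rewrite natr_sum; apply: eq_bigr => s _; rewrite natrM expr2.
have PY : (Pk k)%:R = \sum_(d <- Y) ((\sum_(t : letter X) (cnt k t d)%:R) ^+ 2 : R).
  rewrite (Pk_Y uY hY) natr_sum; apply: eq_bigr => d _.
  by rewrite natrM natr_sum expr2.
rewrite EY PY mulr_sumr -sumrB (bigD1_seq d0) /= ?mem_undup ?inE ?eqxx //.
have h1 := lagr (fun s => (cnt k s d0)%:R : R) t t'.
have h2 : 0 <= \sum_(d <- Y | d != d0) (L%:R * \sum_(s : letter X) ((cnt k s d)%:R ^+ 2 : R)
           - (\sum_(s : letter X) (cnt k s d)%:R) ^+ 2).
  apply: sumr_ge0 => d _.
  have := lagr (fun s => (cnt k s d)%:R : R) t t.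
  rewrite subrr expr0n /=; lra.
simpl in h1; lra.
Qed.

Local Close Scope ring_scope.

Lemma pj_cons_eqg a u (d : CG) :
  (pj (a :: u) == d) = (pj u == (mul (inv (gen a)) d : CG)).
Proof.
apply/eqP/eqP => [e|e].
  by rewrite -(e : prj (a :: u) = d) /= mulKg.
by rewrite /pj proj_cons (e : prj u = _) mulgK.
Qed.

Lemma cnt_succ k a (d : CG) :
  cnt k.+2 a d = \sum_(t | t != linv a) cnt k.+1 t (mul (inv (gen a)) d : CG).
Proof.
rewrite /cnt big_W_succ (bigD1 a) //= [X in _ + X]big1 ?addn0; last first.
  by move=> b hb; apply: big1 => v _ /=; rewrite /hd /= (negbTE hb).
rewrite exchange_big /= big_mkcond /=; apply: eq_big_seq => u hu.
rewrite (ok_hd _ hu) /hd /= eqxx /= pj_cons_eqg.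
case: (boolP (head a0 u != linv a)) => hh.
  rewrite (bigD1 (head a0 u)) //= eqxx /= big1 ?addn0 // => t /andP [_ ht].
  by rewrite eq_sym (negbTE ht).
rewrite big1 // => t ht; apply/eqP; rewrite eqb0; apply/negP => /andP [/eqP e _].
by move: hh; rewrite e ht.
Qed.

Lemma sum_cnt_uniq k t (ys : seq CG) : uniq ys ->
  \sum_(y <- ys) cnt k t y <= size (W k).
Proof.
move=> uy; rewrite /cnt exchange_big /= -sum1_size; apply: leq_sum => u _.
apply: (@leq_trans (\sum_(y <- ys) (pj u == y : nat))).
  by apply: leq_sum => y _; case: (hd u == t).
rewrite (eq_bigr (fun y => if pj u == y then 1 else 0)); last first.
  by move=> y _; case: (_ == _).
rewrite -big_mkcond sum1_count.
rewrite (eq_count (a2 := pred1 (pj u))); last by move=> y; rewrite /= eq_sym.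
by rewrite count_uniq_mem // leq_b1.
Qed.

Lemma size_W_pos k : 2 <= L -> 0 < size (W k.+1).
Proof.
move=> L2; elim: k => [|k IH]; first by rewrite size_W1; lia.
rewrite size_W_succ muln_gt0 IH andbT; lia.
Qed.

Lemma Ek_le k : Ek k <= size (W k) * size (W k).
Proof.
rewrite /Ek -sum1_size big_distrl /=; apply: leq_sum => u _.
rewrite mul1n; apply: leq_sum => v _; exact: leq_b1.
Qed.

Local Open Scope ring_scope.

Definition Nr k : R := (size (W k))%:R.
Definition ee k : R := (Ek k)%:R / (Nr k ^+ 2).

Lemma Nr_pos k : (2 <= L)%N -> 0 < Nr k.+1.
Proof. by move=> L2; rewrite /Nr ltr0n size_W_pos. Qed.

Lemma ee_ge0 k : 0 <= ee k.
Proof. by rewrite /ee divr_ge0 // exprn_ge0. Qed.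

Lemma ee_le1 k : (2 <= L)%N -> ee k.+1 <= 1.
Proof.
move=> L2; rewrite /ee ler_pdivrMr ?exprn_gt0 ?Nr_pos // mul1r /Nr expr2 -natrM ler_nat.
exact: Ek_le.
Qed.

Lemma D_eq k : (2 < L)%N ->
  2 * (L%:R * (Ek k.+1)%:R - (Pk k.+1)%:R) =
  (2 * (L%:R - 1) ^+ 2 / (L%:R - 2)) * Nr k.+1 ^+ 2 * (ee k.+1 - ee k.+2).
Proof.
move=> L3.
have L2 : (2 <= L)%N by lia.
have hN := Nr_pos k L2.
rewrite /ee E_succ // /Nr size_W_succ natrD !natrM natrB; last exact: L2.
rewrite -subn1 natrB; last by lia.
have hL2 : (L%:R - 2 : R) != 0.
  by rewrite subr_eq0 -[2]/(2%:R : R) eqr_nat; lia.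
have hL1 : (L%:R - 1 : R) != 0.
  by rewrite subr_eq0 pnatr_eq1; lia.
field; rewrite hL2 /=.
by rewrite hL1 andbT gt_eqF.
Qed.

Lemma abs_le_of_sq (x b : R) : 0 <= b -> x ^+ 2 <= b ^+ 2 -> `|x| <= b.
Proof.
move=> b0 h; have n0 := normr_ge0 x.
have e : `|x| ^+ 2 = x ^+ 2 by rewrite real_normK ?num_real.
rewrite -e in h; nra.
Qed.

Lemma card_neq_linv a : #|[pred t : letter X | t != linv a]| = L.-1.
Proof. by rewrite -(cardC1 (linv a)). Qed.

Lemma cnt_succR k a (d : CG) :
  (cnt k.+2 a d)%:R = \sum_(t | t != linv a) ((cnt k.+1 t (mul (inv (gen a)) d : CG))%:R : R).
Proof. by rewrite cnt_succ natr_sum. Qed.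

Lemma step_mono k (kap : R) :
  (forall t d, (cnt k.+1 t d)%:R <= kap * Nr k.+1) ->
  forall t d, (cnt k.+2 t d)%:R <= kap * Nr k.+2.
Proof.
move=> h a d; rewrite cnt_succR.
apply: (@le_trans _ _ (\sum_(t | t != linv a) (kap * Nr k.+1))).
  by apply: ler_sum => t _; exact: h.
rewrite sumr_const card_neq_linv /Nr size_W_succ natrM -mulr_natr.
by rewrite le_eqVlt; apply/orP; left; apply/eqP; ring.
Qed.

Definition act (w : word) (y : G) : G := foldr (fun a acc => mul (gen a) acc) y w.

Lemma actE w y : act w y = mul (prj w) y.
Proof. by elim: w => [|a w IH] /=; rewrite ?mul1g // IH mulA. Qed.

Lemma approx_level k (th : R) t0 a (d : CG) :
  (forall t t' (y : CG), `|(cnt k.+1 t y)%:R - (cnt k.+1 t' y)%:R| <= th * Nr k.+1) ->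
  `|(cnt k.+2 a d)%:R - L.-1%:R * (cnt k.+1 t0 (mul (inv (gen a)) d : CG))%:R|
     <= L.-1%:R * (th * Nr k.+1).
Proof.
move=> H; rewrite cnt_succR.
rewrite [X in _ - X]mulr_natl -(card_neq_linv a) -sumr_const -sumrB.
apply: le_trans (ler_norm_sum _ _ _) _.
apply: le_trans (ler_sum _ (fun t _ => H t t0 _)) _.
by rewrite sumr_const card_neq_linv mulr_natl.
Qed.

Lemma pair_step k (th : R) t0 c a (y : CG) : (2 < L)%N ->
  (forall t t' (y : CG), `|(cnt k.+1 t y)%:R - (cnt k.+1 t' y)%:R| <= th * Nr k.+1) ->
  (forall t t' (y : CG), `|(cnt k.+2 t y)%:R - (cnt k.+2 t' y)%:R| <= th * Nr k.+2) ->
  `|(cnt k.+1 t0 (mul (gen c) (mul (gen a) y) : CG))%:R - (cnt k.+1 t0 y)%:R : R|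
     <= 3 * th * Nr k.+1.
Proof.
move=> L3 H1 H2.
pose z : CG := mul (inv (gen a)) (mul (gen a) y).
have e1 : mul (inv (gen a)) (mul (gen a) y) = y := mulKg _ _.
have e2 : mul (inv (gen (linv c))) (mul (gen a) y) = mul (gen c) (mul (gen a) y).
  by rewrite gen_linv invgK.
have A1 := approx_level t0 a (mul (gen a) y : CG) H1; rewrite e1 in A1.
have A2 := approx_level t0 (linv c) (mul (gen a) y : CG) H1; rewrite e2 in A2.
have A3 := H2 a (linv c) (mul (gen a) y : CG).
move: A1 A2 A3; rewrite /Nr size_W_succ natrM -/(Nr k.+1).
set l := (L.-1)%:R : R.
have lpos : 0 < l by rewrite ltr0n; lia.
set fz := ((cnt k.+1 t0 _)%:R : R).
set fy := ((cnt k.+1 t0 y)%:R : R).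
set ca := ((cnt k.+2 a _)%:R : R).
set cb := ((cnt k.+2 (linv c) _)%:R : R).
rewrite !ler_norml => /andP [a1 a2] /andP [b1 b2] /andP [c1 c2].
apply/andP; split; nra.
Qed.

Lemma even_step (f : CG -> R) (B : R) :
  (forall c a (y : CG), `|f (mul (gen c) (mul (gen a) y) : CG) - f y| <= B) ->
  forall n w (y : CG), (size w <= n.*2)%N -> ~~ odd (size w) ->
  `|f (act w y : CG) - f y| <= n%:R * B.
Proof.
move=> H; elim=> [|n IH] w y.
  case: w => [|c w] //= _ _.
  by rewrite subrr normr0 mul0r.
case: w => [|c [|a w]] //=.
- by move=> _ _; rewrite subrr normr0 mulr_ge0 // (le_trans _ (H a0 a0 y)).
- rewrite doubleS !ltnS negbK => hs ho.
  have h1 := IH w y hs ho.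
  have h2 := H c a (act w y).
  rewrite -(subrKA (f (act w y : CG))).
  apply: le_trans (ler_normD _ _) _.
  by rewrite mulrSr addrC mulrDl mul1r lerD.
Qed.

Lemma sum_ge_seq (s : seq word) (F : word -> R) (m : R) :
  (forall w, w \in s -> m <= F w) -> (size s)%:R * m <= \sum_(w <- s) F w.
Proof.
elim: s => [|w s IH] h; first by rewrite big_nil mul0r.
rewrite big_cons /= -addn1 natrD mulrDl mul1r addrC lerD //.
  by apply: h; rewrite inE eqxx.
by apply: IH => v hv; apply: h; rewrite inE hv orbT.
Qed.

Lemma sum_gt_seq (s : seq word) (F : word -> R) (m : R) : s != [::] ->
  (forall w, w \in s -> m < F w) -> (size s)%:R * m < \sum_(w <- s) F w.
Proof.
case: s => [|w s] // _ h.
rewrite big_cons /= -addn1 natrD mulrDl mul1r addrC ltr_leD //.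
  by apply: h; rewrite inE eqxx.
by apply: sum_ge_seq => v hv; apply/ltW/h; rewrite inE hv orbT.
Qed.

Lemma no_big_point k (kap th : R) (ws : seq word) (r : nat) :
  (2 < L)%N -> 0 < kap -> 0 <= th ->
  (forall t t' (y : CG), `|(cnt k.+1 t y)%:R - (cnt k.+1 t' y)%:R| <= th * Nr k.+1) ->
  (forall t t' (y : CG), `|(cnt k.+2 t y)%:R - (cnt k.+2 t' y)%:R| <= th * Nr k.+2) ->
  uniq (map pj ws) -> all (fun w => ~~ odd (size w)) ws ->
  (forall w, w \in ws -> size w <= r.*2)%N ->
  r%:R * (3 * th) <= kap / 2 -> 1 <= (size ws)%:R * (kap / 2) ->
  forall t0 (d : CG), (cnt k.+1 t0 d)%:R <= kap * Nr k.+1.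
Proof.
move=> L3 kap0 th0 H1 H2 uws hev hsz hth hK t0 d.
rewrite leNgt; apply/negP => big.
have L2 : (2 <= L)%N by lia.
have N0 := Nr_pos k L2.
pose f := fun y : CG => ((cnt k.+1 t0 y)%:R : R).
have PS : forall c a (y : CG), `|f (mul (gen c) (mul (gen a) y) : CG) - f y| <= 3 * th * Nr k.+1.
  by move=> c a y; apply: pair_step.
have ES := even_step PS.
have low : forall w, w \in ws -> kap / 2 * Nr k.+1 < f (act w d).
  move=> w hw; have := ES r w d (hsz w hw) (allP hev w hw).
  rewrite ler_norml => /andP [h _].
  have : r%:R * (3 * th) * Nr k.+1 <= kap / 2 * Nr k.+1 by rewrite ler_pM2r.
  rewrite /f in h *; move: big; set x := (cnt k.+1 t0 d)%:R; nra.
have uact : uniq (map (fun w => act w d : CG) ws).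
  rewrite (eq_map (fun w => actE w d)) (map_comp (fun p : CG => mul p d : CG) pj).
  rewrite map_inj_uniq // => p q; exact: mulg_injr.
have sum_le : \sum_(w <- ws) f (act w d) <= Nr k.+1.
  have := sum_cnt_uniq k.+1 t0 uact.
  by rewrite big_map /Nr -(ler_nat R) natr_sum.
have ne : ws != [::] by case: ws hK {uws hev hsz low uact sum_le} => //=; rewrite mul0r ler10.
have := sum_gt_seq ne low.
move: hK sum_le; set S := \sum_(w <- ws) _; set sz := (size ws)%:R.
move=> hK sum_le hS.
have : sz * (kap / 2 * Nr k.+1) >= Nr k.+1.
  by rewrite mulrA -[X in X <= _]mul1r ler_pM2r.
lra.
Qed.

Definition Cst : R := 2 * (L%:R - 1) ^+ 2 / (L%:R - 2).

Lemma Cst_pos : (2 < L)%N -> 0 < Cst.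
Proof.
move=> L3; have h3 : (3%:R : R) <= L%:R by rewrite ler_nat.
rewrite /Cst divr_gt0 // ?mulr_gt0 ?exprn_gt0 //; lra.
Qed.

Lemma ee_mono k : (2 < L)%N -> ee k.+2 <= ee k.+1.
Proof.
move=> L3; have := cnt_ineq k.+1 a0 a0 (one : CG).
rewrite subrr expr0n /= D_eq // -/Cst => h.
have C0 := Cst_pos L3; have N0 := Nr_pos k (ltnW L3).
have N2 : 0 < Nr k.+1 ^+ 2 by rewrite exprn_gt0.
rewrite -subr_ge0; move: h; set e := _ - _; by rewrite pmulr_rge0 // mulr_gt0.
Qed.

Lemma H_of_ee k (th : R) : (2 < L)%N -> 0 <= th ->
  ee k.+1 - ee k.+2 <= th ^+ 2 / Cst ->
  forall t t' (y : CG), `|(cnt k.+1 t y)%:R - (cnt k.+1 t' y)%:R| <= th * Nr k.+1.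
Proof.
move=> L3 th0 he t t' y.
have C0 := Cst_pos L3; have N0 := Nr_pos k (ltnW L3).
apply: abs_le_of_sq; first by rewrite mulr_ge0 // ltW.
apply: le_trans (cnt_ineq _ _ _ _) _.
rewrite D_eq // -/Cst.
have h : Cst * (ee k.+1 - ee k.+2) <= th ^+ 2.
  by rewrite mulrC -ler_pdivlMr.
have N2 : 0 < Nr k.+1 ^+ 2 by rewrite exprn_gt0.
rewrite exprMn -mulrA mulrCA; move: h; set e := _ - _; nra.
Qed.

Lemma exists_small (eta : R) : (2 < L)%N -> 0 < eta ->
  exists k, ee k.+1 - ee k.+3 <= eta.
Proof.
move=> L3 e0; apply/not_existsP => H.
have H' : forall k, ee k.+3 < ee k.+1 - eta.
  by move=> k; have := H k; move/negP; rewrite -ltNge; lra.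
have dec : forall i, ee (i.*2).+1 <= 1 - i%:R * eta.
  elim=> [|i IH]; first by rewrite mul0r subr0; apply: ee_le1; lia.
  rewrite doubleS; have := H' (i.*2); rewrite -natr1; lra.
pose i := Num.Def.archi_bound (1 / eta).
have hi : 1 / eta < i%:R by apply: archi_boundP; rewrite divr_ge0 // ltW.
have := dec i; have := ee_ge0 (i.*2).+1.
move: hi; rewrite ltr_pdivrMr //; lra.
Qed.

Lemma not_all_in (ys : seq CG) : ~ finite_set [set: G] -> exists y : CG, y \notin ys.
Proof.
move=> inf; apply/not_existsP => H; apply: inf.
apply: (@sub_finite_set _ _ [set` ys]); last exact: finite_seq.
by move=> y _ /=; have := H y; move/negP; rewrite negbK.
Qed.

Lemma even_words K : ~ finite_set [set: G] -> (forall y : G, exists w, prj w = y) ->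
  exists ws : seq word, [/\ size ws = K, uniq (map pj ws) & all (fun w => ~~ odd (size w)) ws].
Proof.
move=> inf gen_; elim: K => [|K [ws [sz u ev]]]; first by exists [::].
have [y hy] := not_all_in (map pj ws ++ map (fun p : CG => mul p (inv (gen a0)) : CG) (map pj ws)) inf.
have [w hw] := gen_ y.
rewrite mem_cat negb_or in hy; case/andP: hy => hy1 hy2.
case: (boolP (odd (size w))) => ow.
  exists ((w ++ [:: a0]) :: ws); split => /=; [by rewrite sz| |by rewrite size_cat addn1 /= ow].
  rewrite u andbT; apply/negP => /mapP [v hv e].
  move: hy2; rewrite (_ : y = mul (pj v) (inv (gen a0))) ?map_f ?map_f //.
  have e' : prj (w ++ [:: a0]) = prj v := e.
  rewrite proj_cat hw /= mulg1 in e'.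
  by rewrite /pj -e' -mulA mulgV mulg1.
exists (w :: ws); split => /=; [by rewrite sz| |by rewrite ow].
by rewrite u andbT; apply/negP => /mapP [v hv e]; move: hy1; rewrite -[y]hw -/(pj w) e map_f.
Qed.

Lemma sphere_small (kap : R) : (2 < L)%N -> 0 < kap -> ~ finite_set [set: G] ->
  (forall y : G, exists w, prj w = y) ->
  exists k0, forall k, (k0 <= k)%N -> forall t (d : CG), (cnt k.+1 t d)%:R <= kap * Nr k.+1.
Proof.
move=> L3 kap0 inf gen_.
pose K := Num.Def.archi_bound (2 / kap).
have hK : 2 / kap < K%:R by apply: archi_boundP; rewrite divr_ge0 // ltW.
have [ws [sz u ev]] := even_words K inf gen_.
pose r := (\max_(w <- ws) size w)%N.
have hsz : forall w, w \in ws -> (size w <= r.*2)%N.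
  move=> w hw.
  have h := leq_bigmax_seq (r := ws) (P := xpredT) (F := fun w => size w) w hw isT.
  by rewrite (leq_trans h) // -addnn leq_addr.
pose th := kap / (2 * (3 * r%:R + 1)).
have r0 : 0 <= (r%:R : R) by [].
have den0 : 0 < 2 * (3 * (r%:R : R) + 1) by rewrite mulr_gt0 //; lra.
have th0 : 0 < th by rewrite divr_gt0.
have hth : r%:R * (3 * th) <= kap / 2.
  have e : th * (2 * (3 * r%:R + 1)) = kap by rewrite /th mulrVK ?unitfE ?gt_eqF.
  lra.
have hK' : 1 <= (size ws)%:R * (kap / 2).
  rewrite sz; move: hK; rewrite ltr_pdivrMr //; lra.
have eta0 : 0 < th ^+ 2 / Cst by rewrite divr_gt0 ?exprn_gt0 ?Cst_pos.
have [k1 hk1] := exists_small L3 eta0.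
have e1 : ee k1.+1 - ee k1.+2 <= th ^+ 2 / Cst by have := ee_mono k1.+1 L3; lra.
have e2 : ee k1.+2 - ee k1.+3 <= th ^+ 2 / Cst by have := ee_mono k1 L3; lra.
have H1 := H_of_ee L3 (ltW th0) e1.
have H2 := H_of_ee (k := k1.+1) L3 (ltW th0) e2.
have base := no_big_point L3 kap0 (ltW th0) H1 H2 u ev hsz hth hK'.
exists k1 => k /subnK <-; elim: (k - k1)%N => [|j IH] //.
by rewrite addSn; apply: step_mono.
Qed.

Lemma size_W_ge1 k : (2 <= L)%N -> (1 <= size (W k))%N.
Proof. by case: k => [|k] L2 //; exact: size_W_pos. Qed.

Lemma count_ball_nat (p : pred word) n :
  count p (Pilot.Defs.ball X n) = (\sum_(0 <= k < n.+1) count p (W k))%N.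
Proof. by rewrite count_ball big_mkord. Qed.

Lemma size_ball_ge n : (2 <= L)%N -> (n.+1 <= size (Pilot.Defs.ball X n))%N.
Proof.
move=> L2; rewrite -count_predT count_ball.
apply: (@leq_trans (\sum_(k < n.+1) 1)%N); first by rewrite sum1_card card_ord.
by apply: leq_sum => k _; rewrite count_predT size_W_ge1.
Qed.

Lemma count_W_sum k (d : CG) : count (fun u => pj u == d) (W k) = (\sum_(t : letter X) cnt k t d)%N.
Proof. by rewrite sum_cnt -sum1_count big_mkcond /=; apply: eq_bigr => u _; case: (_ == _). Qed.

Lemma ball_small (eps : R) : (2 < L)%N -> 0 < eps -> ~ finite_set [set: G] ->
  (forall y : G, exists w, prj w = y) ->
  exists n0, forall n, (n0 <= n)%N -> forall d : CG,
    (count (fun u => pj u == d) (Pilot.Defs.ball X n))%:R <=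
       eps * (size (Pilot.Defs.ball X n))%:R.
Proof.
move=> L3 e0 inf gen_.
have L0 : 0 < (L%:R : R) by rewrite ltr0n; lia.
have kap0 : 0 < eps / 2 / L%:R by rewrite !divr_gt0.
have [k0 hk0] := sphere_small L3 kap0 inf gen_.
pose B0 := size (Pilot.Defs.ball X k0).
pose n1 := Num.Def.archi_bound (2 * B0%:R / eps).
have hn1 : 2 * B0%:R / eps < n1%:R.
  by apply: archi_boundP; rewrite divr_ge0 // ?mulr_ge0 // ltW.
exists (maxn k0 n1) => n; rewrite geq_max => /andP [hkn hn] d.
have sW : forall k, (k0 <= k)%N -> (count (fun u => pj u == d) (W k.+1))%:R <=
                                   eps / 2 * (size (W k.+1))%:R.
  move=> k hk; rewrite count_W_sum natr_sum.
  apply: (@le_trans _ _ (\sum_(t : letter X) (eps / 2 / L%:R * Nr k.+1))).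
    by apply: ler_sum => t _; apply: hk0.
  rewrite sumr_const (_ : #|_| = L); last by apply: eq_card.
  rewrite -(mulr_natr (eps / 2 / L%:R * Nr k.+1) L) /Nr.
  rewrite le_eqVlt; apply/orP; left; apply/eqP.
  have lz : (L%:R : R) != 0 by rewrite pnatr_eq0 -lt0n; lia.
  by field.
rewrite count_ball_nat (big_cat_nat _ (n := k0.+1)) // ?ltnS //.
rewrite natrD -count_ball_nat.
have h1 : (count (fun u => pj u == d) (Pilot.Defs.ball X k0))%:R <= (B0%:R : R).
  by rewrite ler_nat count_size.
have h2 : (\sum_(k0.+1 <= k < n.+1) count (fun u => pj u == d) (W k))%:R <=
          eps / 2 * (size (Pilot.Defs.ball X n))%:R.
  rewrite natr_sum.
  apply: (@le_trans _ _ (\sum_(k0.+1 <= k < n.+1) eps / 2 * (size (W k))%:R)).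
    rewrite big_nat_cond [X in _ <= X]big_nat_cond; apply: ler_sum => k /andP [/andP [hk _] _].
    by have := sW k.-1; rewrite prednK ?(leq_trans _ hk) //; apply; rewrite -ltnS prednK // (leq_trans _ hk).
  rewrite -mulr_sumr ler_pM2l ?divr_gt0 //.
  rewrite -count_predT count_ball_nat natr_sum (@big_cat_nat _ _ _ k0.+1 0 n.+1) // ?ltnS //=.
  rewrite [X in _ <= _ + X](eq_bigr (fun i => (size (W i))%:R)); last by move=> i _; rewrite count_predT.
  by rewrite lerDr sumr_ge0.
have h3 : (B0%:R : R) <= eps / 2 * (size (Pilot.Defs.ball X n))%:R.
  have : ((n.+1)%:R : R) <= (size (Pilot.Defs.ball X n))%:R.
    by rewrite ler_nat size_ball_ge //; lia.
  have : (n1%:R : R) <= n%:R by rewrite ler_nat.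
  rewrite -natr1 => hs hn'.
  move: hn1; rewrite ltr_pdivrMr // => hn1.
  have : eps * n1%:R <= eps * (size (Pilot.Defs.ball X n))%:R.
    by rewrite ler_pM2l //; lra.
  lra.
set c := (count _ _)%:R in h1 *; set c2 := (_%:R) in h2 *.
lra.
Qed.

Local Close Scope ring_scope.

Definition pw (a : letter X) k : G := iter k (mul (gen a)) one.

Lemma prj_nseq a k : prj (nseq k a) = pw a k.
Proof. by elim: k => [|k IH] //=; rewrite IH. Qed.

Lemma pwD a i j : pw a (i + j) = mul (pw a i) (pw a j).
Proof. by elim: i => [|i IH] /=; rewrite ?mul1g // IH mulA. Qed.

Lemma pw_linv a j : mul (pw (linv a) j) (pw a j) = one.
Proof.
elim: j => [|j IH]; first by rewrite /= mul1g.
have e : pw a j.+1 = mul (pw a j) (gen a) by rewrite -addn1 pwD /= mulg1.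
by rewrite e /= -mulA (mulA (pw (linv a) j)) IH mul1g gen_linv mulVg.
Qed.

Lemma inv_uniq x y : mul x y = one -> y = inv x.
Proof. by move=> e; rewrite -(mulKg x y) e mulg1. Qed.

Lemma finite_of_pow a p : (forall y : G, exists w, prj w = y) ->
  (forall c : letter X, c = a \/ c = linv a) ->
  (0 < p)%N -> pw a p = one -> finite_set [set: G].
Proof.
move=> gen_all two p0 hp.
have H : forall w, exists2 i, (i < p)%N & prj w = pw a i.
  elim=> [|c w [i hi e]]; first by exists 0%N.
  rewrite proj_cons e; case: (two c) => ->.
    case: (ltnP i.+1 p) => h; first by exists i.+1.
    exists 0%N => //; have e' : i.+1 = p by apply/eqP; rewrite eqn_leq h hi.
    by rewrite -[mul _ _]/(pw a i.+1) e' hp.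
  case: i hi e => [|i] hi e.
    exists p.-1; first by rewrite prednK.
    rewrite /= mulg1 gen_linv; symmetry; apply: inv_uniq.
    by rewrite -[mul _ (pw a p.-1)]/(pw a p.-1.+1) prednK.
  by exists i => //; [exact: ltnW | rewrite /= gen_linv mulKg].
apply: (@sub_finite_set _ _ [set` map (fun i => pw a i : CG) (iota 0 p)]); last exact: finite_seq.
move=> y _; have [w hw] := gen_all y; have [i hi e] := H w.
rewrite /= -hw e; apply/mapP; exists i => //.
by rewrite mem_iota add0n hi.
Qed.

Lemma red_nseq (two : forall c : letter X, c = a0 \/ c = linv a0) w :
  reduced w -> w = nseq (size w) (head a0 w).
Proof.
elim: w => [|c [|d w] IH] //= /andP [hdc hr].
have e := IH hr; rewrite /= in e.
suff edc : d = c by rewrite e edc.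
have lK := linvK a0.
move: hdc; case: (two c) => ->; case: (two d) => -> //; by rewrite ?lK eqxx.
Qed.

Lemma single_inj (gen_all : forall y : G, exists w, prj w = y)
  (two : forall c : letter X, c = a0 \/ c = linv a0) (inf : ~ finite_set [set: G]) u v :
  reduced u -> reduced v -> pj u = pj v -> u = v.
Proof.
move=> hu hv; rewrite (red_nseq two hu) (red_nseq two hv).
set c1 := head a0 u; set c2 := head a0 v; set i := size u; set j := size v.
rewrite /pj !prj_nseq => e.
have two1 : forall c : letter X, c = c1 \/ c = linv c1.
  move=> c; case: (two c1) => ->; case: (two c) => ->; auto.
  by rewrite linvK; auto.
case: (two1 c2) => ec2; rewrite ec2 in e *.
  case: (ltngtP i j) => [hij|hij|->] //.
  - exfalso; apply: inf; apply: (finite_of_pow (p := (j - i)%N) gen_all two1); first by rewrite subn_gt0.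
    by apply: (@mulg_injl (pw c1 i)); rewrite -pwD subnKC ?(ltnW hij) // mulg1.
  - exfalso; apply: inf; apply: (finite_of_pow (p := (i - j)%N) gen_all two1); first by rewrite subn_gt0.
    by apply: (@mulg_injl (pw c1 j)); rewrite -pwD subnKC ?(ltnW hij) // mulg1.
have e2 : pw c1 (j + i) = one.
  by rewrite pwD e -{1}(linvK c1) pw_linv.
case: (posnP (j + i)) => h0.
  by move/eqP: h0; rewrite addn_eq0 => /andP [/eqP -> /eqP ->].
by exfalso; apply: inf; apply: (finite_of_pow gen_all two1 h0 e2).
Qed.

Lemma count_le1 (s : seq word) (P : pred word) : uniq s ->
  (forall x y, x \in s -> y \in s -> P x -> P y -> x = y) -> (count P s <= 1)%N.
Proof.
move=> us h; rewrite -size_filter.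
have uf : uniq [seq z <- s | P z] := filter_uniq P us.
case ef : [seq z <- s | P z] uf => [|x [|y r]] //= /andP [hx _].
have hxs : x \in [seq z <- s | P z] by rewrite ef inE eqxx.
have hys : y \in [seq z <- s | P z] by rewrite ef !inE eqxx orbT.
move: hxs hys; rewrite !mem_filter => /andP [px xs] /andP [py ys].
by move: hx; rewrite (h x y xs ys px py) inE eqxx.
Qed.

Lemma ball_reduced n w : w \in Pilot.Defs.ball X n -> reduced w.
Proof. by rewrite /Pilot.Defs.ball mem_undup mem_filter => /andP []. Qed.

Lemma ball_single n (d : CG) (gen_all : forall y : G, exists w, prj w = y)
  (two : forall c : letter X, c = a0 \/ c = linv a0) (inf : ~ finite_set [set: G]) :
  (count (fun u => pj u == d) (Pilot.Defs.ball X n) <= 1)%N.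
Proof.
apply: count_le1; first exact: undup_uniq.
move=> x y hx hy /eqP px /eqP py.
apply: (single_inj gen_all two inf (ball_reduced hx) (ball_reduced hy)).
by rewrite px py.
Qed.

Lemma size_ball_pos n : (0 < size (Pilot.Defs.ball X n))%N.
Proof. by rewrite size_ball big_ord_recl /= /W /=. Qed.

Local Open Scope ring_scope.

Lemma ratio_le (om : word) n :
  Pilot.Defs.ratio (R := R) (kerproj mul one inv g) om n <=
  (count (fun b => pj b == (inv (pj om) : CG)) (Pilot.Defs.ball X n))%:R /
     (size (Pilot.Defs.ball X n))%:R.
Proof.
rewrite /Pilot.Defs.ratio ler_pM2r; last first.
  by rewrite invr_gt0 ltr0n size_ball_pos.
rewrite ler_nat; apply: (leq_trans (count_undup _ _)); rewrite count_map.
apply: sub_count => b /=; rewrite /preim /= => /asboolP [_ e].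
rewrite proj_fmul in e; apply/eqP.
by rewrite /pj -(mulKg (prj om) (prj b)) e mulg1.
Qed.

Lemma L_ge2 : (2 <= L)%N.
Proof.
have h := max_card (pred2 a0 (linv a0)); rewrite card2 in h.
have ne : a0 != linv a0 by case: a0 => x b; rewrite /linv /= xpair_eqE eqxx /=; case: b.
by rewrite ne in h.
Qed.

Lemma eventually_small (eps : R) : 0 < eps ->
  (forall y : G, exists w, prj w = y) -> ~ finite_set [set: G] ->
  (forall c : letter X, c = a0 \/ c = linv a0) \/ (2 < L)%N ->
  exists n0, forall n, (n0 <= n)%N -> forall om : word,
    Pilot.Defs.ratio (R := R) (kerproj mul one inv g) om n <= eps.
Proof.
move=> e0 gen_all inf [two|L3].
  pose n0 := Num.Def.archi_bound (1 / eps).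
  have hn0 : 1 / eps < n0%:R by apply: archi_boundP; rewrite divr_ge0 // ltW.
  exists n0 => n hn om; apply: (le_trans (ratio_le om n)).
  have sp : (0 : R) < (size (Pilot.Defs.ball X n))%:R by rewrite ltr0n size_ball_pos.
  rewrite ler_pdivrMr //.
  have h1 : ((count (fun b => pj b == (inv (pj om) : CG)) (Pilot.Defs.ball X n))%:R : R) <= 1.
    by rewrite -[1]/(1%:R : R) ler_nat ball_single.
  have h2 : ((n.+1)%:R : R) <= (size (Pilot.Defs.ball X n))%:R.
    by rewrite ler_nat size_ball_ge // L_ge2.
  have h3 : (n0%:R : R) <= n%:R by rewrite ler_nat.
  move: hn0; rewrite ltr_pdivrMr // => hn0.
  move: h2; rewrite -natr1 => h2.
  have : eps * n0%:R <= eps * (size (Pilot.Defs.ball X n))%:R.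
    by rewrite ler_pM2l //; lra.
  lra.
have [n0 hn0] := ball_small L3 e0 inf gen_all.
exists n0 => n hn om; apply: (le_trans (ratio_le om n)).
have sp : (0 : R) < (size (Pilot.Defs.ball X n))%:R by rewrite ltr0n size_ball_pos.
by rewrite ler_pdivrMr // hn0.
Qed.

Lemma ratio_ge0 om n : 0 <= Pilot.Defs.ratio (R := R) (kerproj mul one inv g) om n.
Proof. by rewrite /Pilot.Defs.ratio divr_ge0. Qed.

End Grp.

Section Final.
Local Open Scope ring_scope.
Local Open Scope classical_set_scope.

Lemma limsup0 (R : realType) (u : nat -> R) :
  (forall e : R, 0 < e -> exists n0, forall n, (n0 <= n)%N -> 0 <= u n <= e) ->
  limn_sup u = 0.
Proof.
move=> H.
have c : u @ \oo --> 0.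
  apply/cvgrPdist_le => e e0.
  have [n0 hn0] := H e e0.
  exists n0 => // n /= hn.
  have /andP [h1 h2] := hn0 n hn.
  by rewrite sub0r normrN ger0_norm.
by have [_ ->] := cvg_limn_inf_sup c.
Qed.
End Final.

Theorem theorem2p5 (R : realType) (X : finType) (G : Type)
  (mul : G -> G -> G) (one : G) (inv : G -> G) (g : X -> G) :
  is_group mul one inv ->
  injective g ->
  generates mul one inv g ->
  ~ finite_set [set: G] ->
  upper_density (R := R) (kerproj mul one inv g) = 0%R.
Proof.
move=> grp ginj gen_all inf.
case: (pickP (@predT X)) => [x0 _ | hX]; last first.
  exfalso; apply: inf; apply: (@sub_finite_set _ _ [set one]); last exact: finite_set1.
  move=> y _; have [[|a w] hw] := gen_all y; first by rewrite -hw.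
  by have := hX a.1.
pose a0 : letter X := (x0, false).
have cases : (forall c : letter X, c = a0 \/ c = linv a0) \/ (2 < #|{: letter X}|)%N.
  case: (leqP #|X| 1) => hX1.
    left; case=> x b; have e : x = x0 := fintype_le1P hX1 x0 x.
    by rewrite e; case: b; [right|left].
  right; rewrite card_prod card_bool; lia.
rewrite /upper_density; apply: limsup0 => e e0.
have [n0 hn0] := eventually_small grp (a0 := a0) e0 gen_all inf cases.
have ne : forall n, ([set r : R | exists om, reduced om /\ r = Pilot.Defs.ratio (kerproj mul one inv g) om n] !=set0)%classic.
  by move=> n; exists (Pilot.Defs.ratio (kerproj mul one inv g) [::] n); exists [::].
exists n0 => n hn; apply/andP; split.
  apply: le_trans (ratio_ge0 mul one inv g R [::] n) _.
  apply: sup_upper_bound; last by exists [::].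
  split; first exact: ne.
  by exists e => r [om [_ ->]]; exact: hn0.
apply: ge_sup; first exact: ne.
by move=> r [om [_ ->]]; exact: hn0.
Qed.
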